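(* Let $j\ge 1$, $\lambda\ge 1$, $s\ge 0$ be integers and let $w=w_{j,s,\lambda}$ be the leaf weight sequence defined in the context. Let $g=g_{j,s,\lambda}$ be the sequence defined by $g(n)=w(n)$ for $1\le n\le 3+2s+\lambda j$ and \[ g(n)=g\bigl(n-s-g(n-j)\bigr)+\lambda j\qquad (n>3+2s+\lambda j). \] Then this recursion is well defined for all positive integers $n$ (every argument $n-s-g(n-j)$ lies in $\{1,\dots,n-1\}$), and $g(n)=w(n)$ for every positive integer $n$.
   Context: Fix integers $j\ge1$, $\lambda\ge1$, $s\ge0$. Define a labeled infinite rooted tree $\mathcal K$ as follows. It has ''supernodes'' $S_0,S_1,S_2,\dots$ with an edge between $S_i$ and $S_{i+1}$ for every $i\ge0$ ($S_0$ is the root). $S_0$ has two further children: the ''initial leaf'' and a node $N_0$, which is a leaf. For each $i\ge1$, $S_i$ has a child $N_i$ (the ''knot node''), and attached to $N_i$ are $\lambda$ chains, each a path of $i\cdot j$ nodes hanging from $N_i$; the last (bottom) node of each chain is a leaf. Each supernode carries $s$ labels and every other node carries exactly one label. The labels are the consecutive positive integers $1,2,3,\dots$, assigned in the following order: initial leaf, $S_0$, $N_0$; then for $i=1,2,3,\dots$: $S_i$ (its $s$ labels), $N_i$, then the nodes of the first chain of $N_i$ from top to bottom, then the second chain, ..., then the $\lambda$-th chain. The initial leaf has weight $1$; every other leaf of $\mathcal K$ (namely $N_0$ and the bottom node of each chain) has weight $j$. The leaf weight sequence $w(n)=w_{j,s,\lambda}(n)$ ($n\ge1$) is the total weight of the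 leaves of $\mathcal K$ whose label is $\le n$. Explicitly, $w(n)=1+j\cdot\#\{\ell\in L:\ell\le n\}$, where $L$ consists of the number $s+2$ together with the numbers $L_{i,c}=s+2+\sum_{l=1}^{i-1}(s+1+\lambda l j)+s+1+c\,i\,j$ for $i\ge1$, $1\le c\le\lambda$. *)

(* Defs.v *)
From mathcomp Require Import all_boot.
Set Implicit Arguments. Unset Strict Implicit. Unset Printing Implicit Defensive.

Definition Lic (j s lam i c : nat) : nat :=
  s + 2 + \sum_(1 <= l < i) (s + 1 + lam * l * j) + s + 1 + c * i * j.

(* membership in the set L = {s+2} U {L_{i,c} : i >= 1, 1 <= c <= lambda}.
   Since L_{i,c} >= i, it suffices to search i <= ell. *)
Definition inL (j s lam ell : nat) : bool :=
  (ell == s + 2) ||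
  [exists i : 'I_ell.+1, exists c : 'I_lam.+1,
     [&& 1 <= i, 1 <= c & Lic j s lam i c == ell]].

(* w(n) = 1 + j * #{ell in L : ell <= n}   (elements of L are positive) *)
Definition w (j s lam n : nat) : nat :=
  1 + j * \sum_(1 <= ell < n.+1) inL j s lam ell.

Definition Nthr (j s lam : nat) : nat := 3 + 2 * s + lam * j.

(* g computed with fuel; the (never intended to be used) default 0 is
   returned if a recursive argument falls outside {1,...,n-1}. *)
Fixpoint gaux (j s lam fuel n : nat) : nat :=
  match fuel with
  | 0 => 0
  | f.+1 =>
    if n <= Nthr j s lam then w j s lam n
    else let m := n - s - gaux j s lam f (n - j) in
         if (1 <= m) && (m <= n - 1) then gaux j s lam f m + lam * j else 0
  end.

Definition g (j s lam n : nat) : nat := gaux j s lam n n.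

(* Main.v *)
Require Import Defs.
From mathcomp Require Import all_boot zify.
Set Implicit Arguments. Unset Strict Implicit. Unset Printing Implicit Defensive.

Definition AA (j s lam i : nat) := s + 2 + \sum_(1 <= l < i) (s + 1 + lam * l * j).
Definition cnt (j s lam n : nat) := \sum_(1 <= l < n.+1) inL j s lam l.
Definition Xp (j s lam i k : nat) := if k == 0 then AA j s lam i else Lic j s lam i k.

Lemma LicE j s lam i c : Lic j s lam i c = AA j s lam i + s + 1 + c * (i * j).
Proof. by rewrite /Lic /AA mulnA. Qed.

Lemma AAS j s lam i : 1 <= i -> AA j s lam i.+1 = AA j s lam i + (s + 1 + lam * i * j).
Proof. by move=> hi; rewrite /AA big_nat_recr //= addnA. Qed.

Lemma AA1 j s lam : AA j s lam 1 = s + 2.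
Proof. by rewrite /AA big_geq // addn0. Qed.

Lemma AA_le_S j s lam i : AA j s lam i <= AA j s lam i.+1.
Proof. case: i => [|i]; first by rewrite /AA !big_geq. by rewrite (@AAS _ _ _ i.+1) //; lia. Qed.

Lemma AA_mono j s lam i i' : i <= i' -> AA j s lam i <= AA j s lam i'.
Proof. by apply: (homo_leq leqnn leq_trans (AA_le_S j s lam)). Qed.

Lemma AA_ge j s lam i : s + 2 <= AA j s lam i.
Proof. by rewrite /AA leq_addr. Qed.

Lemma inL_leaf j s lam i c : 1 <= j -> 1 <= i -> 1 <= c <= lam -> inL j s lam (Lic j s lam i c).
Proof.
move=> hj hi /andP[hc1 hc2]; rewrite /inL; apply/orP; right.
have h1 : i <= i * j by rewrite leq_pmulr.
have h2 : i * j <= c * (i * j) by rewrite leq_pmull.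
have hiL : i < (Lic j s lam i c).+1 by rewrite LicE; lia.
have hcL : c < lam.+1 by lia.
apply/existsP; exists (Ordinal hiL); apply/existsP; exists (Ordinal hcL).
by rewrite /= hi hc1 eqxx.
Qed.

Lemma inL_s2 j s lam : inL j s lam (s + 2).
Proof. by rewrite /inL eqxx. Qed.

Lemma inL_inv j s lam l : inL j s lam l ->
  l = s + 2 \/ exists i c, 1 <= i /\ 1 <= c <= lam /\ l = Lic j s lam i c.
Proof.
case/orP => [/eqP->|/existsP [i /existsP [c /and3P [hi hc /eqP <-]]]]; [by left|right].
exists i, c; split => //; rewrite hc /=; have := ltn_ord c; lia.
Qed.

Lemma inL_ge j s lam l : inL j s lam l -> s + 2 <= l.
Proof.
case/inL_inv => [->//|[i [c [_ [_ ->]]]]].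
rewrite LicE; have := AA_ge j s lam i; lia.
Qed.

Lemma leaf_order j s lam i l : 1 <= i -> inL j s lam l ->
  l <= AA j s lam i \/ (exists c, 1 <= c <= lam /\ l = Lic j s lam i c)
  \/ Lic j s lam i lam < l.
Proof.
move=> hi /inL_inv [->|[i' [c [hi' [/andP[hc1 hc2] ->]]]]].
  by left; apply: AA_ge.
case: (ltngtP i' i) => h.
- left. have h1 := AA_mono j s lam h. rewrite AAS // in h1.
  rewrite LicE. have : c * (i' * j) <= lam * i' * j by rewrite mulnA leq_mul2r leq_mul2r hc2 !orbT.
  lia.
- right; right. have h1 := AA_mono j s lam h. rewrite AAS // in h1.
  rewrite !LicE. have : lam * (i * j) = lam * i * j by rewrite mulnA.
  nia.
- by right; left; exists c; rewrite hc1 hc2 h.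
Qed.

Lemma gap j s lam i k l : 1 <= j -> 1 <= i -> k < lam ->
  Xp j s lam i k < l < Lic j s lam i k.+1 -> ~~ inL j s lam l.
Proof.
move=> hj hi hk /andP[h1 h2]; apply/negP => /(leaf_order hi) [h|[[c [/andP[hc1 hc2] e]]|h]].
- have : AA j s lam i <= Xp j s lam i k by rewrite /Xp; case: eqP => _ //; rewrite LicE; lia.
  lia.
- subst l; move: h1 h2; rewrite /Xp !LicE.
  have hD : 0 < i * j by rewrite muln_gt0 hi.
  case: eqP => [->|/eqP kn0] h1 h2.
  + have : c * (i * j) < 1 * (i * j) by lia.
    by rewrite ltn_pmul2r // ltnNge hc1.
  + have : k * (i * j) < c * (i * j) by lia.
    have : c * (i * j) < k.+1 * (i * j) by lia.
    rewrite !ltn_pmul2r //; lia.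
- move: h2 h; rewrite !LicE.
  have : k.+1 * (i * j) <= lam * (i * j) by rewrite leq_mul2r hk orbT.
  lia.
Qed.

Lemma cnt_S j s lam n : cnt j s lam n.+1 = cnt j s lam n + inL j s lam n.+1.
Proof. by rewrite /cnt big_nat_recr. Qed.

Lemma cnt0 j s lam : cnt j s lam 0 = 0.
Proof. by rewrite /cnt big_geq. Qed.

Lemma cnt_gap j s lam m n : m <= n ->
  (forall l, m < l <= n -> ~~ inL j s lam l) -> cnt j s lam n = cnt j s lam m.
Proof.
move=> hmn H; rewrite /cnt (@big_cat_nat _ _ _ m.+1) //= [X in _ + X = _]big_nat_cond [X in _ + X = _]big1 ?addn0 //.
by move=> l /andP[/andP[h1 h2] _]; rewrite (negbTE (H l _)) // h1.
Qed.

Lemma cnt_next j s lam m l : m < l -> inL j s lam l ->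
  (forall x, m < x < l -> ~~ inL j s lam x) -> cnt j s lam l = (cnt j s lam m).+1.
Proof.
case: l => [//|p] hm hl H; rewrite cnt_S hl (@cnt_gap _ _ _ m p) ?addn1 //.
Qed.

Lemma cnt_s2 j s lam : cnt j s lam (s + 2) = 1.
Proof.
rewrite (@cnt_next _ _ _ 0) ?cnt0 ?inL_s2 //; first by lia.
move=> x /andP[_ h]; apply/negP => /inL_ge; lia.
Qed.

Lemma cnt_Lic j s lam i k : 1 <= j -> 1 <= i -> 1 <= k <= lam ->
  cnt j s lam (Lic j s lam i k) = cnt j s lam (AA j s lam i) + k.
Proof.
move=> hj hi; elim: k => [//|k IH] /andP[_ hk].
have hD : 0 < i * j by rewrite muln_gt0 hi.
case: k IH hk => [|k] IH hk.
- rewrite (@cnt_next _ _ _ (AA j s lam i)) ?addn1 //; first by rewrite LicE; lia.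
    by apply: inL_leaf.
  move=> x hx; apply: (@gap _ _ _ i 0) => //.
- rewrite (@cnt_next _ _ _ (Lic j s lam i k.+1)) ?IH ?addnS //; first by lia.
    by rewrite !LicE; lia.
    by apply: inL_leaf; lia.
  move=> x hx; apply: (@gap _ _ _ i k.+1) => //.
Qed.

Lemma cnt_AA j s lam i : 1 <= j -> 1 <= lam -> cnt j s lam (AA j s lam i.+1) = 1 + lam * i.
Proof.
move=> hj hl; elim: i => [|i IH]; first by rewrite AA1 cnt_s2 muln0.
have -> : AA j s lam i.+2 = Lic j s lam i.+1 lam.
  by rewrite AAS // LicE; lia.
by rewrite cnt_Lic // ?IH ?mulnS; lia.
Qed.

Lemma cntE j s lam i k n : 1 <= j -> 1 <= lam -> k < lam ->
  Xp j s lam i.+1 k <= n < Lic j s lam i.+1 k.+1 -> cnt j s lam n = 1 + lam * i + k.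
Proof.
move=> hj hl hk /andP[h1 h2].
rewrite (@cnt_gap _ _ _ (Xp j s lam i.+1 k)) //; last first.
  by move=> l /andP[l1 l2]; apply: (@gap _ _ _ i.+1 k) => //; rewrite l1; lia.
rewrite /Xp; case: eqP => [->|/eqP kn0]; first by rewrite cnt_AA // addn0.
rewrite cnt_Lic // ?cnt_AA //; lia.
Qed.

Lemma locate j s lam n : 1 <= j -> 1 <= lam -> s + 2 <= n ->
  exists i k, k < lam /\ Xp j s lam i.+1 k <= n < Lic j s lam i.+1 k.+1.
Proof.
move=> hj hl; elim: n => [|n IH] hn; first by lia.
case: (eqVneq n.+1 (s + 2)) => [e|ne].
  exists 0, 0; split => //; rewrite /Xp /= AA1 e LicE AA1; lia.
have [i [k [hk /andP[h1 h2]]]] := IH ltac:(lia).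
case: (ltnP n.+1 (Lic j s lam i.+1 k.+1)) => h3.
  by exists i, k; split => //; rewrite h3; lia.
have e : n.+1 = Lic j s lam i.+1 k.+1 by lia.
case: (ltnP k.+1 lam) => hk2.
  exists i, k.+1; split => //; rewrite /Xp /= -e leqnn /= e !LicE.
  have : 0 < i.+1 * j by rewrite muln_gt0.
  lia.
have ek : k.+1 = lam by lia.
exists i.+1, 0; split => //; rewrite /Xp /= e !LicE (@AAS _ _ _ i.+1) // ek.
have : 0 < i.+2 * j by rewrite muln_gt0.
have : lam * (i.+1 * j) = lam * i.+1 * j by rewrite mulnA.
lia.
Qed.

Lemma key j s lam n : 1 <= j -> 1 <= lam -> Nthr j s lam < n ->
  1 <= n - s - (1 + j * cnt j s lam (n - j)) /\
  cnt j s lam n = cnt j s lam (n - s - (1 + j * cnt j s lam (n - j))) + lam.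
Proof.
move=> hj hl hn.
have [i [k [hk /andP[h1 h2]]]] := @locate j s lam n hj hl ltac:(rewrite /Nthr in hn; lia).
case: i h1 h2 => [|p] h1 h2.
  exfalso; move: h2 hn; rewrite LicE AA1 /Nthr.
  have : k.+1 * (1 * j) <= lam * j by rewrite mul1n leq_mul2r hk orbT.
  lia.
have hC := @cntE j s lam p.+1 k n hj hl hk ltac:(by rewrite h1 h2).
have eA := @AAS j s lam p.+1 isT.
have ha := AA_ge j s lam p.+1.
have hkE : k.+1 * (p.+1 * j) <= lam * (p.+1 * j) by rewrite leq_mul2r hk orbT.
move: h1 h2; rewrite /Xp !LicE eA; case: eqP => [k0|/eqP kn0] h1 h2.
- subst k.
  case: (ltnP (n - j) (AA j s lam p.+2)) => h3; rewrite eA in h3.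
  + have eL : lam.-1 * (p.+1 * j) + p.+1 * j = lam * (p.+1 * j).
      by rewrite -mulSnr prednK.
    have hC' : cnt j s lam (n - j) = lam * p.+1.
      have := @cntE j s lam p lam.-1 (n - j) hj hl; rewrite prednK // => ->.
          by rewrite mulnS; lia.
        by lia.
      by rewrite /Xp !LicE; case: eqP => [l0|/eqP ln0]; lia.
    have hP : cnt j s lam (n - s - (1 + j * cnt j s lam (n - j))) = 1 + lam * p + 0.
      by apply: (@cntE j s lam p 0) => //; rewrite /Xp /= hC' LicE; lia.
    split; first by rewrite hC'; lia.
    by rewrite hP hC; lia.
  + have hC' : cnt j s lam (n - j) = 1 + lam * p.+1 + 0.
      by apply: (@cntE j s lam p.+1 0) => //; rewrite /Xp /= LicE eA; lia.
    have hP : cnt j s lam (n - s - (1 + j * cnt j s lam (n - j))) = 1 + lam * p + 0.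
      by apply: (@cntE j s lam p 0) => //; rewrite /Xp /= hC' LicE; lia.
    split; first by rewrite hC'; lia.
    by rewrite hP hC; lia.
- case: (ltnP (n - j) (Lic j s lam p.+2 k)) => h3; rewrite LicE eA in h3.
  + case: k kn0 hk hC hkE h1 h2 h3 => [//|k'] _ hk hC hkE h1 h2 h3.
    have hC' : cnt j s lam (n - j) = 1 + lam * p.+1 + k'.
      apply: (@cntE j s lam p.+1 k') => //; first by lia.
      rewrite /Xp !LicE eA; case: eqP => [l0|/eqP ln0]; lia.
    have hP : cnt j s lam (n - s - (1 + j * cnt j s lam (n - j))) = 1 + lam * p + k'.+1.
      by apply: (@cntE j s lam p k'.+1) => //; rewrite /Xp /= hC' !LicE; lia.
    split; first by rewrite hC'; lia.
    by rewrite hP hC; lia.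
  + have hC' : cnt j s lam (n - j) = 1 + lam * p.+1 + k.
      by apply: (@cntE j s lam p.+1 k) => //; rewrite /Xp (negbTE kn0) !LicE eA; lia.
    have hP : cnt j s lam (n - s - (1 + j * cnt j s lam (n - j))) = 1 + lam * p + k.
      apply: (@cntE j s lam p k) => //.
      rewrite /Xp (negbTE kn0) hC' !LicE. clear -h2 h3 hj. lia.
    split; first by rewrite hC'; lia.
    by rewrite hP hC; lia.
Qed.

Lemma wE j s lam n : w j s lam n = 1 + j * cnt j s lam n.
Proof. by []. Qed.

Lemma gaux_ok j s lam : 1 <= j -> 1 <= lam ->
  forall n f, 1 <= n -> n <= f -> gaux j s lam f n = w j s lam n.
Proof.
move=> hj hl n; elim/ltn_ind: n => n IH [|f] hn hf; first by lia.
rewrite /=; case: ifP => hN //.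
have hN' : Nthr j s lam < n by rewrite ltnNge hN.
have hlj : j <= lam * j by rewrite leq_pmull.
  have hNj : j + 3 <= Nthr j s lam by rewrite /Nthr; lia.
rewrite IH; [|lia|lia|lia].
have [k1 k2] := key hj hl hN'.
rewrite wE.
have -> : (1 <= n - s - (1 + j * cnt j s lam (n - j))) &&
          (n - s - (1 + j * cnt j s lam (n - j)) <= n - 1) by apply/andP; split; lia.
rewrite IH; [|lia|lia|lia].
rewrite !wE k2; lia.
Qed.

Theorem theorem2p1 (j lam s : nat) (hj : 1 <= j) (hlam : 1 <= lam) :
  (forall n, Nthr j s lam < n ->
     1 <= n - s - g j s lam (n - j) <= n - 1) /\
  (forall n, 1 <= n -> g j s lam n = w j s lam n).
Proof.
split.
- move=> n hN.
  have hlj : j <= lam * j by rewrite leq_pmull.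
  have hNj : j + 3 <= Nthr j s lam by rewrite /Nthr; lia.
  rewrite /g gaux_ok //; last by lia.
  have [k1 _] := key hj hlam hN.
  rewrite wE; apply/andP; split; lia.
- by move=> n hn; rewrite /g gaux_ok.
Qed.
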